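(* Let $a\in[0,1]$ and, for $x\in(0,1)$, $$f(x):=\pi^2-36\big(\arcsin\tfrac x2\big)^2,\qquad g(x):=9(1-x^2).$$ Then $\mathrm{ARE}_{R,T}=f/g$ on $(0,1)$. Let $b:=\frac fg(a)$ and $c:=\big(\frac fg\big)'(a)$ (for $a=1$ these mean the one-sided limits at $1-$), and define $f_0(x):=f(x)-bg(x)-c(x-a)g(x)$, $g_0(x):=(x-a)^2g(x)$, and for $i=1,2,3,4$, $f_i:=a_if_{i-1}'$, $g_i:=a_ig_{i-1}'$, $r_i:=f_i/g_i$, where $$a_1(x)=\sqrt{4-x^2},\quad a_2(x)=\frac{\sqrt{4-x^2}}{2-x^2},\quad a_3(x)=\frac{(2-x^2)^2}{50-29x^2+9x^4},\quad a_4(x)=\frac{(50-29x^2+9x^4)^2}{2-x^2}.$$ Then on $(0,1)$: $r_4$ is strictly increasing, $f_4<0$ and $g_4<0$.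
   Context: $\mathrm{ARE}_{R,T}(\rho_0)$ is the Pitman asymptotic relative efficiency of Pearson's correlation $R$ to Kendall's $T$ for testing $H_0:\rho=\rho_0$ with i.i.d. bivariate normal data of correlation $\rho$; it equals $\frac{\sigma_T^2(\rho_0)\mu_R'(\rho_0)^2}{\sigma_R^2(\rho_0)\mu_T'(\rho_0)^2}$ with $\mu_R(\rho)=\rho$, $\sigma_R^2(\rho)=(1-\rho^2)^2$, $\mu_T(\rho)=\frac2\pi\arcsin\rho$, $\sigma_T^2(\rho)=\frac49-\frac{16}{\pi^2}(\arcsin\frac\rho2)^2$. *)

(* Defs.v *)
From Stdlib Require Import Reals.
From Coquelicot Require Import Coquelicot.
Open Scope R_scope.

(* Ingredients of the Pitman ARE of Pearson's R to Kendall's T. *)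
Definition mu_R (rho : R) : R := rho.
Definition sigma2_R (rho : R) : R := (1 - rho ^ 2) ^ 2.
Definition mu_T (rho : R) : R := 2 / PI * asin rho.
Definition sigma2_T (rho : R) : R := 4 / 9 - 16 / PI ^ 2 * (asin (rho / 2)) ^ 2.

Definition ARE_RT (rho0 : R) : R :=
  sigma2_T rho0 * (Derive mu_R rho0) ^ 2
  / (sigma2_R rho0 * (Derive mu_T rho0) ^ 2).

Definition fA (x : R) : R := PI ^ 2 - 36 * (asin (x / 2)) ^ 2.
Definition gA (x : R) : R := 9 * (1 - x ^ 2).
Definition hA (x : R) : R := fA x / gA x.

Definition f0 (a b c : R) (x : R) : R := fA x - b * gA x - c * (x - a) * gA x.
Definition g0 (a : R) (x : R) : R := (x - a) ^ 2 * gA x.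

Definition a_coef (i : nat) (x : R) : R :=
  match i with
  | 1%nat => sqrt (4 - x ^ 2)
  | 2%nat => sqrt (4 - x ^ 2) / (2 - x ^ 2)
  | 3%nat => (2 - x ^ 2) ^ 2 / (50 - 29 * x ^ 2 + 9 * x ^ 4)
  | 4%nat => (50 - 29 * x ^ 2 + 9 * x ^ 4) ^ 2 / (2 - x ^ 2)
  | _ => 1
  end.

Fixpoint f_seq (a b c : R) (i : nat) : R -> R :=
  match i with
  | O => f0 a b c
  | S j => fun x => a_coef (S j) x * Derive (f_seq a b c j) x
  end.

Fixpoint g_seq (a : R) (i : nat) : R -> R :=
  match i with
  | O => g0 a
  | S j => fun x => a_coef (S j) x * Derive (g_seq a j) x
  end.

Definition r_seq (a b c : R) (i : nat) (x : R) : R := f_seq a b c i x / g_seq a i x.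

(* Main.v *)
Require Import Defs.
From Stdlib Require Import Reals Lra Psatz.
From Coquelicot Require Import Coquelicot.
Open Scope R_scope.

Lemma is_derive_asin y : -1 < y < 1 -> is_derive (fun z => asin z) y (1 / sqrt (1 - y^2)).
Proof.
  intros Hy. apply is_derive_Reals.
  apply derive_pt_eq_1 with (derivable_pt_asin y Hy).
  rewrite derive_pt_asin. unfold Rsqr. replace (y^2) with (y*y) by ring. reflexivity.
Qed.

Lemma Derive_asin y : -1 < y < 1 -> Derive (fun z => asin z) y = 1 / sqrt (1 - y^2).
Proof. intros; apply is_derive_unique, is_derive_asin; auto. Qed.

Lemma ex_derive_asin y : -1 < y < 1 -> ex_derive (fun z => asin z) y.
Proof. intros; eexists; apply is_derive_asin; auto. Qed.

Lemma sqrt_half x : -1 < x < 1 -> sqrt (1 - (x * / 2)^2) = sqrt (4 - x^2) / 2.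
Proof.
  intros Hx.
  assert (H0 : 0 <= 1 - (x * /2)^2) by nra.
  set (s := sqrt (1 - (x * / 2)^2)).
  assert (Hs : s * s = 1 - (x * /2)^2) by (apply sqrt_sqrt; auto).
  assert (Hs0 : 0 <= s) by apply sqrt_pos.
  replace (4 - x^2) with ((2*s)^2) by (field_simplify; nra).
  rewrite sqrt_pow2 by lra. field.
Qed.

Lemma Derive_asin_half x : -1 < x < 1 -> Derive (fun z => asin z) (x * / 2) = 2 / sqrt (4 - x^2).
Proof.
  intros Hx. rewrite Derive_asin by lra. rewrite sqrt_half by auto.
  assert (0 < sqrt (4 - x^2)) by (apply sqrt_lt_R0; nra).
  field. lra.
Qed.

Lemma loc_ext (f g : R -> R) x : -1 < x < 1 -> (forall t, -1 < t < 1 -> f t = g t) ->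
  Derive f x = Derive g x.
Proof.
  intros Hx H. apply Derive_ext_loc.
  assert (He : 0 < Rmin (x+1) (1-x)) by (apply Rmin_glb_lt; lra).
  exists (mkposreal _ He). intros t Ht. apply H.
  unfold ball in Ht; simpl in Ht. unfold AbsRing_ball, abs, minus, plus, opp in Ht; simpl in Ht.
  apply Rabs_lt_between' in Ht.
  pose proof (Rmin_l (x+1) (1-x)); pose proof (Rmin_r (x+1) (1-x)). lra.
Qed.

Definition Sq x := sqrt (4 - x^2).
Definition P1 a b c x := 27*c*x^2 + (18*b-18*a*c)*x - 9*c.
Definition F1 a b c x := -72*asin(x/2) + Sq x * P1 a b c x.
Definition F2 a b c x := (-72 - x*P1 a b c x + (4 - x^2)*(54*c*x + 18*b - 18*a*c))/(2 - x^2).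
Definition Qp x := 50 - 29*x^2 + 9*x^4.
Definition F3 c x := -144*x/Qp x + 9*c.
Definition F4 x := -144*(50+29*x^2-27*x^4)/(2-x^2).

Lemma Sq_pos x : -1 < x < 1 -> 0 < Sq x.
Proof. intros; apply sqrt_lt_R0; nra. Qed.
Lemma Qp_pos x : 0 < Qp x.
Proof. unfold Qp. nra. Qed.

Lemma fS a b c j t : f_seq a b c (S j) t = a_coef (S j) t * Derive (f_seq a b c j) t.
Proof. reflexivity. Qed.

Lemma d0 a b c x : -1 < x < 1 -> is_derive (f0 a b c) x (-72*asin(x/2)/Sq x + P1 a b c x).
Proof.
  intros Hx. unfold f0, fA, gA. auto_derive.
  - apply ex_derive_asin; lra.
  - rewrite Derive_asin_half by auto. pose proof (Sq_pos x Hx). unfold Sq in *. unfold P1, Rdiv.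
    field. lra.
Qed.

Lemma e1 a b c t : -1 < t < 1 -> f_seq a b c 1 t = F1 a b c t.
Proof.
  intros Ht. rewrite fS. change (f_seq a b c 0) with (f0 a b c). rewrite (is_derive_unique _ _ _ (d0 a b c t Ht)).
  cbn [a_coef]. pose proof (Sq_pos t Ht). unfold F1. fold (Sq t). field. lra.
Qed.

Lemma d1 a b c x : -1 < x < 1 -> is_derive (F1 a b c) x
   (-72/Sq x - x/Sq x * P1 a b c x + Sq x * (54*c*x + 18*b - 18*a*c)).
Proof.
  intros Hx. unfold F1, Sq, P1. auto_derive.
  - repeat match goal with |- _ /\ _ => split end; try apply ex_derive_asin; try nra; auto.
  - rewrite Derive_asin_half by auto. pose proof (Sq_pos x Hx). unfold Sq in *. unfold Rdiv.
    replace (4 + - (x * (x * 1))) with (4 - x^2) by ring.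
    field. lra.
Qed.

Lemma e2 a b c t : -1 < t < 1 -> f_seq a b c 2 t = F2 a b c t.
Proof.
  intros Ht. rewrite fS. rewrite (loc_ext _ _ t Ht (e1 a b c)).
  rewrite (is_derive_unique _ _ _ (d1 a b c t Ht)).
  cbn [a_coef]. pose proof (Sq_pos t Ht). unfold F2.
  assert (Hs : Sq t * Sq t = 4 - t^2) by (apply sqrt_sqrt; nra).
  fold (Sq t). rewrite <- Hs. field. split; nra.
Qed.

Lemma d2 a b c x : -1 < x < 1 -> is_derive (F2 a b c) x ((-144*x + 9*c*Qp x)/(2-x^2)^2).
Proof.
  intros Hx. unfold F2, P1, Qp. auto_derive.
  - repeat match goal with |- _ /\ _ => split end; try nra; auto.
  - field. nra.
Qed.

Lemma e3 a b c t : -1 < t < 1 -> f_seq a b c 3 t = F3 c t.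
Proof.
  intros Ht. rewrite fS. rewrite (loc_ext _ _ t Ht (e2 a b c)).
  rewrite (is_derive_unique _ _ _ (d2 a b c t Ht)).
  cbn [a_coef]. pose proof (Qp_pos t). unfold F3. unfold Qp in *. field. split; nra.
Qed.

Lemma d3 c x : is_derive (F3 c) x (-144*(50+29*x^2-27*x^4)/(Qp x)^2).
Proof.
  pose proof (Qp_pos x). unfold F3, Qp in *. auto_derive.
  - repeat match goal with |- _ /\ _ => split end; try nra; auto.
  - field. nra.
Qed.

Lemma e4 a b c t : -1 < t < 1 -> f_seq a b c 4 t = F4 t.
Proof.
  intros Ht. rewrite fS. rewrite (loc_ext _ _ t Ht (e3 a b c)).
  rewrite (is_derive_unique _ _ _ (d3 c t)).
  cbn [a_coef]. pose proof (Qp_pos t). unfold F4. unfold Qp in *. field. split; nra.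
Qed.

Definition g0d a x := 18*(x-a)*(1-x^2) - 18*x*(x-a)^2.
Definition g0dd a x := 18*(1-x^2) - 72*x*(x-a) - 18*(x-a)^2.
Definition G1 a x := Sq x * g0d a x.
Definition G2 a x := ((4 - x^2)*g0dd a x - x*g0d a x)/(2-x^2).
Definition N3 a x := 900*a - 1728*x - 522*a*x^2 + 1152*x^3 + 162*a*x^4 - 288*x^5.
Definition G3 a x := N3 a x / Qp x.
Definition G4 x := 864*(3*x^6 - 11*x^4 + 46*x^2 - 50).

Lemma gS a j t : g_seq a (S j) t = a_coef (S j) t * Derive (g_seq a j) t.
Proof. reflexivity. Qed.

Lemma gd0 a x : is_derive (g0 a) x (g0d a x).
Proof. unfold g0, gA, g0d. auto_derive; auto. ring. Qed.

Lemma ge1 a t : -1 < t < 1 -> g_seq a 1 t = G1 a t.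
Proof.
  intros Ht. rewrite gS. change (g_seq a 0) with (g0 a). rewrite (is_derive_unique _ _ _ (gd0 a t)).
  cbn [a_coef]. unfold G1. reflexivity.
Qed.

Lemma gd1 a x : -1 < x < 1 -> is_derive (G1 a) x (-x/Sq x * g0d a x + Sq x * g0dd a x).
Proof.
  intros Hx. unfold G1, Sq, g0d, g0dd. auto_derive.
  - repeat match goal with |- _ /\ _ => split end; try nra; auto.
  - pose proof (Sq_pos x Hx). unfold Sq in *. unfold Rdiv.
    replace (4 + - (x * (x * 1))) with (4 - x^2) by ring.
    field. lra.
Qed.

Lemma ge2 a t : -1 < t < 1 -> g_seq a 2 t = G2 a t.
Proof.
  intros Ht. rewrite gS. rewrite (loc_ext _ _ t Ht (ge1 a)).
  rewrite (is_derive_unique _ _ _ (gd1 a t Ht)).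
  cbn [a_coef]. pose proof (Sq_pos t Ht). unfold G2.
  assert (Hs : Sq t * Sq t = 4 - t^2) by (apply sqrt_sqrt; nra).
  fold (Sq t). rewrite <- Hs. field. split; nra.
Qed.

Lemma gd2 a x : -1 < x < 1 -> is_derive (G2 a) x (N3 a x/(2-x^2)^2).
Proof.
  intros Hx. unfold G2, N3, g0d, g0dd. auto_derive.
  - repeat match goal with |- _ /\ _ => split end; try nra; auto.
  - field. nra.
Qed.

Lemma ge3 a t : -1 < t < 1 -> g_seq a 3 t = G3 a t.
Proof.
  intros Ht. rewrite gS. rewrite (loc_ext _ _ t Ht (ge2 a)).
  rewrite (is_derive_unique _ _ _ (gd2 a t Ht)).
  cbn [a_coef]. pose proof (Qp_pos t). unfold G3. unfold Qp in *. field. split; nra.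
Qed.

Lemma gd3 a x : is_derive (G3 a) x (864*(2-x^2)*(3*x^6 - 11*x^4 + 46*x^2 - 50)/(Qp x)^2).
Proof.
  pose proof (Qp_pos x). unfold G3, N3, Qp in *. auto_derive.
  - repeat match goal with |- _ /\ _ => split end; try nra; auto.
  - field. nra.
Qed.

Lemma ge4 a t : -1 < t < 1 -> g_seq a 4 t = G4 t.
Proof.
  intros Ht. rewrite gS. rewrite (loc_ext _ _ t Ht (ge3 a)).
  rewrite (is_derive_unique _ _ _ (gd3 a t)).
  cbn [a_coef]. pose proof (Qp_pos t). unfold G4. unfold Qp in *. field. split; nra.
Qed.

Lemma Kpos s t : 0 < t -> t < s -> s < 1 ->
 0 < (-150 - 87*t + 81*t^2)*s^3 + (850 + 343*t - 546*t^2 + 81*t^3)*s^2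
   + (-6100 + 2712*t + 343*t^2 - 87*t^3)*s + (10000 - 6100*t + 850*t^2 - 150*t^3).
Proof. intros. 
set (u := 1 - s). set (v := 1 - t).
assert (Hs : s = 1 - u) by (unfold u; ring). assert (Ht : t = 1 - v) by (unfold v; ring).
rewrite Hs, Ht.
assert (0 < u < 1) by (unfold u; lra). assert (0 < v < 1) by (unfold v; lra).
clearbody u v.
assert (Huv: 0 < u*v) by nra.
assert (uv1: u*v < 1) by nra.
set (w := u*v) in *.
assert (w*w <= w) by nra.
assert (w*w*v <= w) by (assert (w*w*v <= w*w) by nra; nra).
assert (w*w*u <= w) by (assert (w*w*u <= w*w) by nra; nra).
assert (0 <= u*u*u) by nra. assert (0 <= v*v*v) by nra.
assert (0 <= w*v) by nra. assert (0 <= w*u) by nra.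
assert (0 <= w*v*v) by nra. assert (0 <= w*u*u) by nra.
assert (0 <= u*u) by nra. assert (0 <= v*v) by nra.
match goal with |- 0 < ?e => assert (E : e = 2040 + 2144*v + 260*v*v + 156*v*v*v + 2144*u + 2350*w + 281*w*v + 75*w*v*v + 260*u*u + 281*w*u -60*w*w - 81*w*w*v + 156*u*u*u + 75*w*u*u - 81*w*w*u) by (unfold w; ring) end.
rewrite E. lra.
Qed.

Definition En t := 3*t^3 - 11*t^2 + 46*t - 50.
Definition nn t := 50 + 29*t - 27*t^2.
Definition Dn t := 3*t^4 - 17*t^3 + 68*t^2 - 142*t + 100.

Lemma Epos t : 0 < t < 1 -> En t < 0.
Proof. unfold En; intros. nra. Qed.

Lemma Dpos t : 0 < t < 1 -> 0 < Dn t.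
Proof.
  intros Ht. pose proof (Epos t Ht).
  replace (Dn t) with ((t-2)*En t) by (unfold Dn, En; ring). nra.
Qed.

Lemma mono t s : 0 < t -> t < s -> s < 1 -> nn t / (6 * Dn t) < nn s / (6 * Dn s).
Proof.
  intros. pose proof (Dpos t ltac:(lra)). pose proof (Dpos s ltac:(lra)).
  pose proof (Kpos s t H H0 H1).
  assert (E : nn s / (6 * Dn s) - nn t / (6 * Dn t) =
    (s - t) * ((-150 - 87*t + 81*t^2)*s^3 + (850 + 343*t - 546*t^2 + 81*t^3)*s^2
   + (-6100 + 2712*t + 343*t^2 - 87*t^3)*s + (10000 - 6100*t + 850*t^2 - 150*t^3))
   / (6 * Dn s * Dn t)).
  { unfold nn, Dn in *. field. lra. }
  assert (0 < (s - t) * ((-150 - 87*t + 81*t^2)*s^3 + (850 + 343*t - 546*t^2 + 81*t^3)*s^2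
   + (-6100 + 2712*t + 343*t^2 - 87*t^3)*s + (10000 - 6100*t + 850*t^2 - 150*t^3))
   / (6 * Dn s * Dn t)).
  { apply Rdiv_lt_0_compat; [apply Rmult_lt_0_compat; lra | nra]. }
  lra.
Qed.

Lemma r4form z : 0 < z < 1 -> F4 z / G4 z = nn (z^2) / (6 * Dn (z^2)).
Proof.
  intros Hz. assert (H2 : 0 < z^2 < 1) by nra.
  pose proof (Epos _ H2). pose proof (Dpos _ H2).
  unfold F4, G4, nn, Dn, En in *. field. repeat split; nra.
Qed.

Lemma G4neg z : 0 < z < 1 -> G4 z < 0.
Proof.
  intros Hz. assert (H2 : 0 < z^2 < 1) by nra. pose proof (Epos _ H2).
  unfold G4, En in *. nra.
Qed.

Lemma F4neg z : 0 < z < 1 -> F4 z < 0.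
Proof.
  intros Hz. assert (hi : 0 < / (2 - z^2)) by (apply Rinv_0_lt_compat; nra).
  assert (0 < 50 + 29*z^2 - 27*z^4) by (assert (z^4 = z^2*z^2) by ring; assert (0 < z^2 < 1) by nra; nra).
  unfold F4, Rdiv. nra.
Qed.

Lemma are x : 0 < x < 1 -> ARE_RT x = fA x / gA x.
Proof.
  intros Hx. unfold ARE_RT.
  assert (D1 : Derive mu_R x = 1).
  { apply is_derive_unique. unfold mu_R. auto_derive; auto. }
  assert (D2 : Derive mu_T x = 2 / PI * (1 / sqrt (1 - x^2))).
  { apply is_derive_unique. unfold mu_T. auto_derive.
    - apply ex_derive_asin; lra.
    - rewrite Derive_asin by lra. ring. }
  rewrite D1, D2. unfold sigma2_T, sigma2_R, fA, gA.
  assert (0 < sqrt (1 - x^2)) by (apply sqrt_lt_R0; nra).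
  assert (hs : sqrt (1 - x^2) * sqrt (1 - x^2) = 1 - x^2) by (apply sqrt_sqrt; nra).
  pose proof PI_RGT_0.
  set (s := sqrt (1 - x^2)) in *. rewrite <- hs. field. lra.
Qed.

Theorem lemma2 (a b c : R) (ha : 0 <= a <= 1)
  (hb : (a < 1 -> b = hA a) /\
        (a = 1 -> filterlim hA (at_left 1) (locally b)))
  (hc : (a < 1 -> is_derive hA a c) /\
        (a = 1 -> filterlim (Derive hA) (at_left 1) (locally c))) :
  (forall x, 0 < x < 1 -> ARE_RT x = fA x / gA x) /\
  (forall x y, 0 < x -> x < y -> y < 1 -> r_seq a b c 4 x < r_seq a b c 4 y) /\
  (forall x, 0 < x < 1 -> f_seq a b c 4 x < 0 /\ g_seq a 4 x < 0).
Proof.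
  split; [exact are|split].
  - intros x y Hx Hxy Hy. unfold r_seq.
    rewrite !e4, !ge4 by lra.
    rewrite !r4form by lra.
    apply mono; nra.
  - intros x Hx. rewrite e4, ge4 by lra. split; [apply F4neg | apply G4neg]; auto.
Qed.
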